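(* For $i=1,2$ let $(\sigma_i,\varepsilon_i)$ be admissible pairs of $K$ and $q_i:V\to\overline K^{\sigma_i,\varepsilon_i}/\overline R_i$ non-trivial generalized $(\sigma_i,\varepsilon_i)$-quadratic forms with $S_{q_1}=S_{q_2}$. Assume that the polar space $S:=S_{q_1}=S_{q_2}$ has non-degenerate rank at least $2$. Then $q_1$ and $q_2$ are proportional: there is $\kappa\in K\setminus\{0\}$ such that $\sigma_2(t)=\kappa\sigma_1(t)\kappa^{-1}$ for all $t$, $\varepsilon_2=\kappa\kappa^{-\sigma_1}\varepsilon_1$, $\overline R_2=\kappa\overline R_1$, and $q_2(x)=\kappa q_1(x)$ for all $x\in V$.
   Context: $K$ division ring, $V$ right $K$-vector space. Admissible pair $(\sigma,\varepsilon)$: $\sigma$ anti-automorphism, $\varepsilon^\sigma\varepsilon=1$, $t^{\sigma^2}=\varepsilon t\varepsilon^{-1}$. $K_{\sigma,\varepsilon}=\{t-t^\sigma\varepsilon\}$, $\overline K^{\sigma,\varepsilon}=K/K_{\sigma,\varepsilon}$, $\bar t$ class of $t$, $\bar t\circ\lambda=\overline{\lambda^\sigma t\lambda}$; closed subgroups: stable under all $\circ\lambda$. If $(\sigma_2,\varepsilon_2)$ is obtained from $(\sigma_1,\varepsilon_1)$ via $\kappa$ as in the claim, then $\kappa K_{\sigma_1,\varepsilon_1}=K_{\sigma_2,\varepsilon_2}$, so left multiplication by $\kappa$ induces a group isomorphism $\overline K^{\sigma_1,\varepsilon_1}\to\overline K^{\sigma_2,\varepsilon_2}$; $\kappa\overline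 R_1$ and $\kappa q_1(x)$ are understood via this map. A generalized $(\sigma,\varepsilon)$-quadratic form with co-defect closed $\overline R$: $q:V\to\overline K^{\sigma,\varepsilon}/\overline R$ with $q(x\lambda)=q(x)\circ\lambda$ and a trace-valued $(\sigma,\varepsilon)$-sesquilinear $f$ ($f(x\lambda,y\mu)=\lambda^\sigma f(x,y)\mu$, $f(y,x)=f(x,y)^\sigma\varepsilon$, $f(x,x)\in\{t+t^\sigma\varepsilon\}$) with $q(x+y)=q(x)+q(y)+(\overline{f(x,y)}+\overline R)$. Non-trivial: not identically $\overline R$. $S_q$: the point-line geometry of points $[x]$ with $q(x)=\overline R$ and lines of $\mathrm{PG}(V)$ consisting of such points; it is a polar space. The non-degenerate rank of a polar space is the rank of its quotient over its radical. *)

(* Defs.v *)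
From HB Require Import structures.
From mathcomp Require Import all_boot all_order all_algebra.
Set Implicit Arguments. Unset Strict Implicit. Unset Printing Implicit Defensive.
Import GRing.Theory.
Local Open Scope ring_scope.

Definition divring_axiom (K : unitRingType) := forall x : K, x != 0 -> x \is a GRing.unit.

(* A right K-vector space V is a left module over the converse ring K^c;
   right scalar multiplication  x * l  is rendered  rscale x l. *)
Definition rscale (K : unitRingType) (V : lmodType K^c) (x : V) (l : K) : V :=
  (l : K^c) *: x.

Section Defs.
Variables (K : unitRingType) (V : lmodType K^c).

Definition anti_automorphism (s : K -> K) :=
  [/\ forall a b, s (a + b) = s a + s b,
      forall a b, s (a * b) = s b * s a
    & bijective s].

Definition admissible (s : K -> K) (e : K) :=
  [/\ anti_automorphism s, s e * e = 1 & forall t, s (s t) = e * t * e^-1].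

Definition in_Kse (s : K -> K) (e : K) (t : K) := exists u, t = u - s u * e.

Definition trace_val (s : K -> K) (e : K) (t : K) := exists u, t = u + s u * e.

(* R is the preimage in K of a closed subgroup Rbar of Kbar = K / K_{sigma,eps}:
   an additive subgroup of K containing K_{sigma,eps} and stable under
   t |-> l^sigma t l. *)
Definition closed_codefect (s : K -> K) (e : K) (R : K -> Prop) :=
  [/\ R 0, forall a b, R a -> R b -> R (a - b),
      forall t, in_Kse s e t -> R t
    & forall t l, R t -> R (s l * t * l)].

Definition sesq_trace (s : K -> K) (e : K) (f : V -> V -> K) :=
  [/\ forall x y z, f (x + y) z = f x z + f y z,
      forall x y z, f x (y + z) = f x y + f x z,
      forall x y l m, f (rscale x l) (rscale y m) = s l * f x y * m,
      forall x y, f y x = s (f x y) * e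
    & forall x, trace_val s e (f x x)].

(* Generalized (sigma,eps)-quadratic form q : V -> Kbar / Rbar with co-defect
   Rbar, represented by a lift q : V -> K (q(x) is the class of q x modulo R,
   the preimage of Rbar in K). *)
Definition gen_quad_form (s : K -> K) (e : K) (R : K -> Prop) (q : V -> K) :=
  [/\ closed_codefect s e R,
      forall x l, R (q (rscale x l) - s l * q x * l)
    & exists f, sesq_trace s e f /\
        forall x y, R (q (x + y) - q x - q y - f x y)].

Definition nontrivial (R : K -> Prop) (q : V -> K) := exists x, ~ R (q x).

Definition singular (R : K -> Prop) (q : V -> K) (x : V) := R (q x).

Definition sing_span (R : K -> Prop) (q : V -> K) (x y : V) :=
  forall a b, singular R q (rscale x a + rscale y b).

Definition indep (x y : V) :=
  forall a b, rscale x a + rscale y b = 0 -> a = 0 /\ b = 0.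

Definition is_line (R : K -> Prop) (q : V -> K) (x y : V) :=
  indep x y /\ sing_span R q x y.

Definition radical_point (R : K -> Prop) (q : V -> K) (r : V) :=
  [/\ r != 0, singular R q r &
      forall y, y != 0 -> singular R q y -> sing_span R q r y].

(* The quotient of S_q over its radical has rank >= 2, i.e. has a line;
   equivalently S_q has a line containing no point of the radical. *)
Definition nondeg_rank_ge2 (R : K -> Prop) (q : V -> K) :=
  exists x y, is_line R q x y /\
    forall a b, (a != 0 \/ b != 0) -> ~ radical_point R q (rscale x a + rscale y b).

(* S_{q1} = S_{q2}: same point sets (lines are determined by the points). *)
Definition same_polar_space (R1 : K -> Prop) (q1 : V -> K) (R2 : K -> Prop) (q2 : V -> K) :=
  forall x, x != 0 -> (singular R1 q1 x <-> singular R2 q2 x).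

End Defs.

(* Main.v *)
Require Import Defs.
From HB Require Import structures.
From mathcomp Require Import all_boot all_order all_algebra.
From Stdlib Require Import Classical.
Set Implicit Arguments. Unset Strict Implicit. Unset Printing Implicit Defensive.
Import GRing.Theory.
Local Open Scope ring_scope.

Module Part1.
Section Basic.
Variables (K : unitRingType) (V : lmodType K^c).

Lemma rscale1 (x : V) : rscale x 1 = x. Proof. exact: scale1r. Qed.
Lemma rscale0 (x : V) : rscale x 0 = 0. Proof. exact: scale0r. Qed.
Lemma rscaleDl (x : V) a b : rscale x (a + b) = rscale x a + rscale x b.
Proof. exact: scalerDl. Qed.

Hypothesis hK : divring_axiom K.

Lemma mulIr' (a b c : K) : c != 0 -> a * c = b * c -> a = b.
Proof. move=> hc h. by rewrite -(mulrK (hK hc) a) h mulrK // hK. Qed.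
Lemma mulrI' (a b c : K) : c != 0 -> c * a = c * b -> a = b.
Proof. move=> hc h. by rewrite -(mulKr (hK hc) a) h mulKr // hK. Qed.
Lemma mul_neq0' (a b : K) : a != 0 -> b != 0 -> a * b != 0.
Proof.
move=> ha hb; apply/eqP => h; move/eqP: hb; apply; apply: (mulrI' ha).
by rewrite h mulr0.
Qed.
End Basic.

Section Form.
Variables (K : unitRingType) (V : lmodType K^c).
Hypothesis hK : divring_axiom K.
Variables (s : K -> K) (e : K) (R : K -> Prop) (q : V -> K) (f : V -> V -> K).

Definition GQ := [/\ admissible s e, closed_codefect s e R,
  (forall x l, R (q (rscale x l) - s l * q x * l)), sesq_trace s e f &
  ((forall x y, R (q (x + y) - q x - q y - f x y)) /\ exists t, ~ R t)].
Hypothesis H : GQ.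

Lemma sD a b : s (a + b) = s a + s b. Proof. by case: H => [[[]]]. Qed.
Lemma sM a b : s (a * b) = s b * s a. Proof. by case: H => [[[]]]. Qed.
Lemma sbij : bijective s. Proof. by case: H => [[[]]]. Qed.
Lemma se : s e * e = 1. Proof. by case: H => [[]]. Qed.
Lemma s0 : s 0 = 0.
Proof. by apply: (addrI (s 0)); rewrite -sD !addr0. Qed.
Lemma sN a : s (- a) = - s a.
Proof. by apply/eqP; rewrite -addr_eq0 -sD addNr s0. Qed.
Lemma s_surj t : exists a, s a = t.
Proof. case: sbij => g _ hg; by exists (g t). Qed.
Lemma s1 : s 1 = 1.
Proof.
have [b hb] := s_surj 1.
by have := sM b 1; rewrite mulr1 hb mulr1 => <-.
Qed.
Lemma s_neq0 a : a != 0 -> s a != 0.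
Proof.
move=> ha; apply/eqP => h; move/eqP: ha; apply.
by apply: (bij_inj sbij); rewrite h s0.
Qed.
Lemma sV a : a != 0 -> s (a^-1) = (s a)^-1.
Proof.
move=> ha.
have h : s (a^-1) * s a = 1 by rewrite -sM mulrV ?hK // s1.
by rewrite -[LHS]mulr1 -(mulrV (hK (s_neq0 ha))) mulrA h mul1r.
Qed.
Lemma e_neq0 : e != 0.
Proof.
apply/eqP => he; have := se; rewrite he mulr0 => /eqP; by rewrite eq_sym oner_eq0.
Qed.

Lemma fD1 x y z : f (x + y) z = f x z + f y z. Proof. by case: H => _ _ _ [] *. Qed.
Lemma fD2 x y z : f x (y + z) = f x y + f x z. Proof. by case: H => _ _ _ [] *. Qed.
Lemma fZ x y l m : f (rscale x l) (rscale y m) = s l * f x y * m.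
Proof. by case: H => _ _ _ [] *. Qed.
Lemma fherm x y : f y x = s (f x y) * e. Proof. by case: H => _ _ _ [] *. Qed.
Lemma fZl x y l : f (rscale x l) y = s l * f x y.
Proof. by have := fZ x y l 1; rewrite rscale1 mulr1. Qed.
Lemma fZr x y m : f x (rscale y m) = f x y * m.
Proof. by have := fZ x y 1 m; rewrite rscale1 s1 mul1r. Qed.
Lemma f0r x : f x 0 = 0.
Proof. by apply: (addrI (f x 0)); rewrite -fD2 !addr0. Qed.
Lemma f0l x : f 0 x = 0.
Proof. by apply: (addrI (f 0 x)); rewrite -fD1 !addr0. Qed.
Lemma fNr x y : f x (- y) = - f x y.
Proof. by apply/eqP; rewrite -addr_eq0 -fD2 addNr f0r. Qed.
Lemma fBr x y z : f x (y - z) = f x y - f x z.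
Proof. by rewrite fD2 fNr. Qed.

Lemma R0 : R 0. Proof. by case: H => _ [] *. Qed.
Lemma RB a b : R a -> R b -> R (a - b). Proof. by case: H => _ [] *; auto. Qed.
Lemma Rst t l : R t -> R (s l * t * l). Proof. by case: H => _ [] *; auto. Qed.
Lemma RN a : R a -> R (- a). Proof. by move=> h; rewrite -sub0r; apply: RB => //; apply: R0. Qed.
Lemma RD a b : R a -> R b -> R (a + b).
Proof. by move=> ha hb; rewrite -[b]opprK; apply: RB => //; apply: RN. Qed.
Lemma Rnt : exists t, ~ R t. Proof. by case: H => _ _ _ _ []. Qed.

Definition eqm a b := R (a - b).
Lemma eqm_refl a : eqm a a. Proof. by rewrite /eqm subrr; apply: R0. Qed.
Lemma eqm_eq a b : a = b -> eqm a b. Proof. by move=> ->; apply: eqm_refl. Qed.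
Lemma eqm_sym a b : eqm a b -> eqm b a.
Proof. by rewrite /eqm => h; rewrite -opprB; apply: RN. Qed.
Lemma eqm_trans a b c : eqm a b -> eqm b c -> eqm a c.
Proof. by rewrite /eqm => h1 h2; have := RD h1 h2; rewrite addrA subrK. Qed.
Lemma eqm_add a b c d : eqm a c -> eqm b d -> eqm (a + b) (c + d).
Proof. by rewrite /eqm => h1 h2; rewrite opprD addrACA; apply: RD. Qed.
Lemma eqmR a b : eqm a b -> (R a <-> R b).
Proof.
rewrite /eqm => h; split => h'.
  by have := RB h' h; rewrite opprB addrC subrK.
by have := RD h h'; rewrite subrK.
Qed.
Lemma eqm0 a : eqm a 0 <-> R a. Proof. by rewrite /eqm subr0. Qed.

Lemma qZs x a : R (q x) -> R (q (rscale x a)).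
Proof.
case: H => _ _ hqZ _ _ hx.
by have := RD (hqZ x a) (Rst a hx); rewrite subrK.
Qed.
Lemma q0 : R (q 0).
Proof.
case: H => _ _ hqZ _ _.
by have := hqZ 0 0; rewrite rscale0 mulr0 subr0.
Qed.
Lemma qD x y : eqm (q (x + y)) (q x + q y + f x y).
Proof. case: H => _ _ _ _ [hqD _]; by rewrite /eqm !opprD !addrA. Qed.

Lemma expand x y a b v : R (q x) -> R (q y) ->
  eqm (q (rscale x a + (rscale y b + v)))
      (q v + s b * f y v + s a * (f x y * b + f x v)).
Proof.
move=> hx hy.
apply: eqm_trans (qD _ _) _.
apply: (@eqm_trans _ (0 + (0 + q v + f (rscale y b) v) + f (rscale x a) (rscale y b + v))).
  apply: eqm_add; last exact: eqm_refl.
  apply: eqm_add; first by apply/eqm0; apply: qZs.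
  apply: eqm_trans (qD _ _) _.
  apply: eqm_add; last exact: eqm_refl.
  apply: eqm_add; last exact: eqm_refl.
  by apply/eqm0; apply: qZs.
apply: eqm_eq.
by rewrite fD2 fZ fZl fZl !add0r mulrDr mulrA addrA.
Qed.

Lemma lineF x y : (forall a b, R (q (rscale x a + rscale y b))) -> f x y = 0.
Proof.
move=> hs.
have hx : R (q x) by have := hs 1 0; rewrite rscale0 addr0 rscale1.
have hy : R (q y) by have := hs 0 1; rewrite rscale0 add0r rscale1.
case: (eqVneq (f x y) 0) => // hne; exfalso.
have [t0 ht0] := Rnt.
have E := expand 1 ((f x y)^-1 * t0) 0 hx hy.
rewrite addr0 !f0r mulr0 addr0 s1 mul1r mulVKr ?hK // in E.
have := hs 1 ((f x y)^-1 * t0); rewrite /singular => hh; have h := proj1 (eqmR E) hh.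
by apply: ht0; have := RB h q0; rewrite addr0 addrC addKr.
Qed.

Lemma radical_of_zero r : r != 0 -> R (q r) -> (forall y, R (q y) -> f r y = 0) ->
  radical_point R q r.
Proof.
move=> hr hqr hf; split => // y _ hy a b.
have E := expand a b 0 hqr hy.
rewrite addr0 (hf y hy) !f0r mul0r mulr0 !addr0 in E.
by rewrite /singular; apply/(eqmR E); rewrite mulr0 addr0; apply: q0.
Qed.

Lemma partner r : ~ radical_point R q r -> r != 0 -> R (q r) ->
  exists w, R (q w) /\ f r w != 0.
Proof.
move=> hnr hr hqr.
case: (classic (exists w, R (q w) /\ f r w != 0)) => // hn; exfalso.
apply: hnr; apply: radical_of_zero => // y hy.
case: (eqVneq (f r y) 0) => // hne; exfalso; apply: hn; by exists y.
Qed.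

Lemma propf x x' w : f x w != 0 -> (forall v, f x v = 0 -> f x' v = 0) ->
  exists mu, forall y, f x' y = mu * f x y.
Proof.
move=> hw himp; exists (f x' w * (f x w)^-1) => y.
have h0 : f x (y - rscale w ((f x w)^-1 * f x y)) = 0.
  by rewrite fBr fZr mulVKr ?hK // subrr.
have := himp _ h0; rewrite fBr fZr => /subr0_eq ->.
by rewrite mulrA.
Qed.

End Form.

End Part1.
Import Part1.

Section Two.
Variables (K : unitRingType) (V : lmodType K^c).
Hypothesis hK : divring_axiom K.
Variables (s1 s2 : K -> K) (e1 e2 : K) (R1 R2 : K -> Prop) (q1 q2 : V -> K)
  (f1 f2 : V -> V -> K).
Hypothesis G1 : GQ s1 e1 R1 q1 f1.
Hypothesis G2 : GQ s2 e2 R2 q2 f2.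
Hypothesis same : forall x, R1 (q1 x) <-> R2 (q2 x).

Lemma lemL u w : R1 (q1 u) -> R1 (q1 w) -> f1 u w != 0 ->
  exists la, forall v, f2 u v = la * f1 u v.
Proof.
move=> hu hw hd; exists (f2 u w * (f1 u w)^-1) => v.
have hu2 := proj1 (same u) hu; have hw2 := proj1 (same w) hw.
set b := - ((f1 u w)^-1 * f1 u v).
suff hdel : f2 u w * b + f2 u v = 0.
  by move/eqP: hdel; rewrite addrC addr_eq0 => /eqP ->; rewrite /b mulrN opprK mulrA.
case: (eqVneq (f2 u w * b + f2 u v) 0) => // hne; exfalso.
move: hne; set del := f2 u w * b + f2 u v => hne.
set C1 := q1 v + s1 b * f1 w v.
set C2 := q2 v + s2 b * f2 w v.
have E1 a : eqm R1 (q1 (rscale u a + (rscale w b + v))) C1.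
  have := expand G1 a b v hu hw.
  by rewrite /b mulrN mulVKr ?hK // addNr mulr0 addr0.
have E2 a : eqm R2 (q2 (rscale u a + (rscale w b + v))) (C2 + s2 a * del).
  by have := expand G2 a b v hu2 hw2.
case: (classic (R1 C1)) => hC.
- have [t0 ht0] := Rnt G2.
  have [a ha] := s_surj G2 ((t0 - C2) * del^-1).
  have h1 := proj2 (eqmR G1 (E1 a)) hC.
  have h2 := proj1 (eqmR G2 (E2 a)) (proj1 (same _) h1).
  by apply: ht0; move: h2; rewrite ha divrK ?hK // addrC subrK.
- have [a ha] := s_surj G2 ((- C2) * del^-1).
  have h2 : R2 (C2 + s2 a * del) by rewrite ha divrK ?hK // addrN; exact: R0 G2.
  have h1 := proj2 (same _) (proj2 (eqmR G2 (E2 a)) h2).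
  exact: hC (proj1 (eqmR G1 (E1 a)) h1).
Qed.

Lemma fr (s : K -> K) e R q f (G : GQ s e R q f) (x y : V) a b z :
  f (rscale x a + rscale y b) z = s a * f x z + s b * f y z.
Proof. by rewrite (fD1 G) !(fZl G). Qed.

Variables (p1 p2 : V).
Hypothesis hind : indep p1 p2.
Hypothesis hss : sing_span R1 q1 p1 p2.
Hypothesis hnr : forall a b, (a != 0 \/ b != 0) ->
  ~ radical_point R1 q1 (rscale p1 a + rscale p2 b).

Lemma r_ne a b : (a != 0 \/ b != 0) -> rscale p1 a + rscale p2 b != 0.
Proof.
move=> hab; apply/eqP => h; have [ha hb] := hind h.
by case: hab; rewrite ?ha ?hb eqxx.
Qed.

Lemma partner_pt a b : (a != 0 \/ b != 0) ->
  exists w, R1 (q1 w) /\ f1 (rscale p1 a + rscale p2 b) w != 0.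
Proof. move=> hab; apply: (partner G1 (hnr hab) (r_ne hab)); exact: hss. Qed.

Lemma main_aux : exists k : K, [/\ k != 0,
    forall t, s2 t = k * s1 t * k^-1,
    e2 = k * s1 (k^-1) * e1,
    forall t, R2 t <-> exists u, R1 u /\ t = k * u
  & forall x, R2 (q2 x - k * q1 x)].
Proof.
have hp1s : R1 (q1 p1) by have := hss 1 0; rewrite /singular rscale1 rscale0 addr0.
have hp2s : R1 (q1 p2) by have := hss 0 1; rewrite /singular rscale1 rscale0 add0r.
have hp11 : f1 p1 p1 = 0.
  by apply: (lineF hK G1) => a b; rewrite -rscaleDl; apply: (qZs G1).
have hp21 : f1 p2 p1 = 0.
  by apply: (lineF hK G1) => a b; rewrite addrC; apply: hss.
have [w1 [hw1 hd]] : exists w, R1 (q1 w) /\ f1 p1 w != 0.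
  by have := partner_pt (a := 1) (b := 0) (or_introl (oner_neq0 K)); rewrite rscale1 rscale0 addr0.
have [w2 [hw2 hd2]] : exists w, R1 (q1 w) /\ f1 p2 w != 0.
  by have := partner_pt (a := 0) (b := 1) (or_intror (oner_neq0 K)); rewrite rscale1 rscale0 add0r.
set d := f1 p1 w1 in hd.
have [k hk] := lemL hp1s hw1 hd.
have [la2 hl2] := lemL hp2s hw2 hd2.
have hk0 : k != 0.
  apply/eqP => k0; move/eqP: hd; apply; apply: (lineF hK G1) => a b.
  apply/(same _).2.
  have := expand G2 a b 0 (proj1 (same _) hp1s) (proj1 (same _) hw1).
  rewrite addr0 !(f0r G2) hk k0 !mul0r !mulr0 !addr0 => E.
  by apply/(eqmR G2 E).2; rewrite mulr0 addr0; exact: q0 G2.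
have [v [hv1 hv2]] : exists v, f1 p1 v = 0 /\ f1 p2 v != 0.
  case: (classic (exists v, f1 p1 v = 0 /\ f1 p2 v != 0)) => // hn; exfalso.
  have himp v : f1 p1 v = 0 -> f1 p2 v = 0.
    by move=> h0; case: (eqVneq (f1 p2 v) 0) => // hne; exfalso; apply: hn; exists v.
  have [mu hmu] := propf hK G1 hd himp.
  have [a ha] := s_surj G1 mu.
  apply: (hnr (a := - a) (b := 1) (or_intror (oner_neq0 K))).
  apply: (radical_of_zero G1 (r_ne (or_intror (oner_neq0 K))) (hss _ _)) => y _.
  by rewrite (fr G1) (sN G1) ha (Part1.s1 G1) mul1r hmu mulNr addNr.
have [v' [hv1' hv2']] : exists v, f1 p2 v = 0 /\ f1 p1 v != 0.
  case: (classic (exists v, f1 p2 v = 0 /\ f1 p1 v != 0)) => // hn; exfalso.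
  have himp vv : f1 p2 vv = 0 -> f1 p1 vv = 0.
    by move=> h0; case: (eqVneq (f1 p1 vv) 0) => // hne; exfalso; apply: hn; exists vv.
  have [mu hmu] := propf hK G1 hd2 himp.
  have [a ha] := s_surj G1 mu.
  apply: (hnr (a := 1) (b := - a) (or_introl (oner_neq0 K))).
  apply: (radical_of_zero G1 (r_ne (or_introl (oner_neq0 K))) (hss _ _)) => y _.
  by rewrite (fr G1) (sN G1) ha (Part1.s1 G1) mul1r hmu mulNr addrN.
have hgen a : s2 a * k = la2 * s1 a.
  have [w [hw hdw]] := partner_pt (or_intror (oner_neq0 K)) (a := a).
  have [la hla] := lemL (hss a 1) hw hdw.
  have e1' := hla v.
  rewrite (fr G2) (fr G1) hk hl2 hv1 !mulr0 !add0r (Part1.s1 G1) (Part1.s1 G2) !mul1r in e1'.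
  have hla2 : la2 = la by apply: (mulIr' hK hv2).
  have e2' := hla v'.
  rewrite (fr G2) (fr G1) hk hl2 hv1' !mulr0 !addr0 !mulrA in e2'.
  by rewrite hla2; apply: (mulIr' hK hv2').
have hkl : k = la2 by have := hgen 1; rewrite (Part1.s1 G1) (Part1.s1 G2) mul1r mulr1.
have hsk a : s2 a * k = k * s1 a by rewrite hgen hkl.
have hs2 t : s2 t = k * s1 t * k^-1 by rewrite -hsk mulrK // hK.
have hL a b y : f2 (rscale p1 a + rscale p2 b) y = k * f1 (rscale p1 a + rscale p2 b) y.
  by rewrite (fr G2) (fr G1) hk hl2 -hkl !mulrA !hsk mulrDr !mulrA.
have [a0 ha0] := s_surj G1 (- (f1 p2 w1 * d^-1)).
set u := rscale p1 a0 + rscale p2 1.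
have huw1 : f1 u w1 = 0.
  by rewrite /u (fr G1) ha0 (Part1.s1 G1) mul1r mulNr divrK ?hK // addNr.
have [y0 [_ hy0]] := partner_pt (a := a0) (b := 1) (or_intror (oner_neq0 K)).
have hup1 : f1 u p1 = 0 by rewrite /u (fr G1) hp11 hp21 !mulr0 addr0.
have hus : R1 (q1 u) by apply: hss.
have hz : R1 (q1 (w1 + u)).
  have := expand G1 1 1 0 hw1 hus.
  rewrite addr0 !rscale1 (fherm G1 u w1) huw1 (Part1.s0 G1) !mul0r !(f0r G1) !mulr0 !addr0 => E.
  by apply/(eqmR G1 E).2; rewrite mulr0 addr0; exact: q0 G1.
have hw1p1 : f1 w1 p1 != 0.
  by rewrite (fherm G1 p1 w1); apply: mul_neq0' => //; [apply: (s_neq0 G1) | apply: (e_neq0 G1)].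
have hzp1 : f1 (w1 + u) p1 = f1 w1 p1 by rewrite (fD1 G1) hup1 addr0.
have hzp1' : f1 (w1 + u) p1 != 0 by rewrite hzp1.
have [lz hlz] := lemL hz hp1s hzp1'.
have [lw hlw] := lemL hw1 hp1s hw1p1.
have heq y : lw * f1 w1 y + k * f1 u y = lz * (f1 w1 y + f1 u y).
  by rewrite -hlw -(fD1 G1) -hlz (fD1 G2) /u hL.
have hlwz : lw = lz.
  by have := heq p1; rewrite hup1 !mulr0 !addr0; exact: (mulIr' hK hw1p1).
have hkw : k = lw.
  have := heq y0; rewrite -hlwz mulrDr => /addrI; exact: (mulIr' hK hy0).
have hw y : f2 w1 y = k * f1 w1 y by rewrite hlw hkw.
have hsk0 : s1 k != 0 by apply: (s_neq0 G1).
have he1 : e1 = s1 k * (k^-1 * e2).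
  have h := fherm G2 p1 w1.
  rewrite hw hk (fherm G1 p1 w1) (sM G2) !hs2 -!mulrA mulKr ?hK // in h.
  apply: (mulrI' hK (s_neq0 G1 hd)); exact: (mulrI' hK hk0).
have he2 : e2 = k * s1 k^-1 * e1.
  by rewrite he1 (sV hK G1 hk0) -mulrA mulKr ?hK // mulVKr ?hK.
have hG x t : R1 (q1 x + s1 (d^-1 * (1 - f1 p1 x)) * f1 w1 x + t) <->
    R2 (q2 x + k * (s1 (d^-1 * (1 - f1 p1 x)) * f1 w1 x + t)).
  set b := d^-1 * (1 - f1 p1 x).
  have [a ha] := s_surj G1 t.
  have hdb : d * b + f1 p1 x = 1 by rewrite /b mulVKr ?hK // subrK.
  have E1 := expand G1 a b x hp1s hw1.
  rewrite hdb mulr1 ha in E1.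
  have E2 := expand G2 a b x (proj1 (same _) hp1s) (proj1 (same _) hw1).
  have eq2 : q2 x + s2 b * f2 w1 x + s2 a * (f2 p1 w1 * b + f2 p1 x)
      = q2 x + k * (s1 b * f1 w1 x + t).
    rewrite hw !hk -mulrA -mulrDr hdb mulr1 !mulrA !hsk -ha.
    by rewrite mulrDr mulrA addrA.
  rewrite eq2 in E2.
  split => h.
    apply/(eqmR G2 E2).1; apply/(same _).1; exact/(eqmR G1 E1).2.
  apply/(eqmR G1 E1).1; apply/(same _).2; exact/(eqmR G2 E2).2.
have hR t : R1 t <-> R2 (k * t).
  have := hG 0 t; rewrite !(f0r G1) mulr0 add0r addr0 => h.
  have hq1 : eqm R1 (q1 0 + t) t by rewrite /eqm addrK; exact: q0 G1.
  have hq2 : eqm R2 (q2 0 + k * t) (k * t) by rewrite /eqm addrK; exact: q0 G2.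
  split => h'.
    by apply/(eqmR G2 hq2).1; apply/h.1; apply/(eqmR G1 hq1).2.
  by apply/(eqmR G1 hq1).1; apply/h.2; apply/(eqmR G2 hq2).2.
exists k; split => //.
- move=> t; split.
    move=> h; exists (k^-1 * t); split; last by rewrite mulVKr ?hK.
    by apply/hR; rewrite mulVKr ?hK.
  by case=> uu [huu ->]; apply/hR.
- move=> x.
  set c := s1 (d^-1 * (1 - f1 p1 x)) * f1 w1 x.
  have := (hG x (- (q1 x + c))).1.
  rewrite addrN.
  have -> : c + - (q1 x + c) = - q1 x by rewrite opprD addrC subrK.
  by rewrite mulrN; apply; exact: R0 G1.
Qed.

End Two.

Unset Implicit Arguments.

Theorem mainTheorem12 (K : unitRingType) (V : lmodType K^c)
  (s1 s2 : K -> K) (e1 e2 : K) (R1 R2 : K -> Prop) (q1 q2 : V -> K) :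
  divring_axiom K ->
  admissible s1 e1 -> admissible s2 e2 ->
  gen_quad_form s1 e1 R1 q1 -> gen_quad_form s2 e2 R2 q2 ->
  nontrivial R1 q1 -> nontrivial R2 q2 ->
  same_polar_space R1 q1 R2 q2 ->
  nondeg_rank_ge2 R1 q1 ->
  exists k : K, [/\ k != 0,
    forall t, s2 t = k * s1 t * k^-1,
    e2 = k * s1 (k^-1) * e1,
    forall t, R2 t <-> exists u, R1 u /\ t = k * u
  & forall x, R2 (q2 x - k * q1 x)].
Proof.
move=> hK adm1 adm2 [cc1 qz1 [f1 [sq1 qd1]]] [cc2 qz2 [f2 [sq2 qd2]]]
  [x1 nx1] [x2 nx2] hsame [p1 [p2 [[hind hss] hnr]]].
have G1 : GQ s1 e1 R1 q1 f1 by split => //; split => //; exists (q1 x1).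
have G2 : GQ s2 e2 R2 q2 f2 by split => //; split => //; exists (q2 x2).
have same : forall x, R1 (q1 x) <-> R2 (q2 x).
  move=> x; case: (eqVneq x 0) => [->|hx]; last exact: hsame x hx.
  by split => _; [exact: q0 G2 | exact: q0 G1].
exact: (main_aux hK G1 G2 same hind hss hnr).
Qed.
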